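(* Let $L$ be a subspace of $\bigwedge^kV$, let $1\le i<j\le n$, and suppose $L$ is monomial with respect to $e_j$, i.e. $L=\big(L\cap\bigwedge^{k}V^{(j)}\big)\oplus\big(L\cap(e_{j}\wedge\bigwedge^{k-1}V^{(j)})\big)$. Then for each $x\in\bigwedge^{k-1}V^{(j)}$ with $e_j\wedge x\in N_{j\to i}L$, it also holds that $e_i\wedge x\in N_{j\to i}L$.
   Context: $\mathbb{F}$ is a field (assumed throughout the paper, for expository purposes, to have characteristic not $2$), $V$ is an $n$-dimensional $\mathbb{F}$-vector space with a fixed basis $e_1,\dots,e_n$, and $\bigwedge V$ its exterior algebra. For $j\in[n]$, $V^{(j)}$ is the span of $\{e_h:h\neq j\}$, and $\bigwedge V^{(j)}$ is viewed as a subalgebra of $\bigwedge V$. Slow shift: for distinct $i,j\in[n]$ and nonzero $m\in\bigwedge^kV$, write uniquely $m=x'+e_j\wedge y'$ with $x'\in\bigwedge^kV^{(j)}$, $y'\in\bigwedge^{k-1}V^{(j)}$, and set $N_{j\to i}m=x'+e_i\wedge y'$ if this is nonzero, and $N_{j\to i}m=e_j\wedge y'$ otherwise (the limit as $t\to0$ of the projective action of the linear map $e_j\mapsto e_i+te_j$ fixing the other $e_h$). For a subspace $L$ of $\bigwedge^kV$, $N_{j\to i}L$ is the span of $\{N_{j\to i}m:m\in L\setminus\{0\}\}$. *)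

(* Defs.v *)
From HB Require Import structures.
From mathcomp Require Import all_boot all_order all_algebra.
Set Implicit Arguments. Unset Strict Implicit. Unset Printing Implicit Defensive.
Import Order.TTheory GRing.Theory.
Local Open Scope ring_scope.

(* Concrete model of the exterior algebra /\V of V = F^n with fixed basis
   e_0,...,e_(n-1) (0-indexed): an element is its coordinate vector on the
   standard basis e_S = e_{s1} /\ ... /\ e_{sk} (s1 < ... < sk), S a subset
   of 'I_n. *)
Definition ext (F : fieldType) (n : nat) := {ffun {set 'I_n} -> F^o}.

Section Ext.
Variables (F : fieldType) (n : nat).
Implicit Types (a b m x y : ext F n) (S T U : {set 'I_n}).

Definition blade S : ext F n := [ffun T : {set 'I_n} => (T == S)%:R].
Definition evec (i : 'I_n) : ext F n := blade [set i].

(* number of inversions when concatenating the increasing lists S and T *)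
Definition inv_count S T : nat := #|[set p in setX S T | (p.2 < p.1)%N]|.

Definition wedge a b : ext F n :=
  [ffun U : {set 'I_n} => \sum_(S : {set 'I_n}) \sum_(T : {set 'I_n})
     (if [disjoint S & T] && (S :|: T == U)
      then (-1) ^+ inv_count S T * a S * b T else 0)].

Definition homog (d : nat) x : Prop := forall S, x S != 0 -> #|S| = d.
(* x is in /\^(k-1) V, with /\^(-1) V = 0 when k = 0 *)
Definition homog_pred (k : nat) x : Prop := forall S, x S != 0 -> (#|S| + 1)%N = k.
(* x lies in the subalgebra /\ V^(j) *)
Definition avoids (j : 'I_n) x : Prop := forall S, x S != 0 -> j \notin S.

(* decomposition m = x' + e_j /\ y' with x', y' in /\ V^(j) *)
Definition xpart (j : 'I_n) m : ext F n := [ffun S : {set 'I_n} => if j \in S then 0 else m S].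
Definition ypart (j : 'I_n) m : ext F n :=
  [ffun T : {set 'I_n} => if j \in T then 0
             else (-1) ^+ #|[set t in T | (t < j)%N]| * m (j |: T)].

Definition slow_shift (j i : 'I_n) m : ext F n :=
  let r := xpart j m + wedge (evec i) (ypart j m) in
  if r != 0 then r else wedge (evec j) (ypart j m).

Definition in_shift (j i : 'I_n) (L : {vspace ext F n}) (v : ext F n) : Prop :=
  exists s : seq (ext F n),
    all (fun m => (m \in L) && (m != 0)) s /\ v \in <<map (slow_shift j i) s>>%VS.

Definition monomial_wrt (k : nat) (j : 'I_n) (L : {vspace ext F n}) : Prop :=
  forall m, m \in L -> exists a y,
    [/\ a \in L, homog k a & avoids j a] /\
    [/\ wedge (evec j) y \in L, homog_pred k y & avoids j y] /\
    m = a + wedge (evec j) y.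
End Ext.
Arguments blade {F n} S.
Arguments evec {F n} i.

(* Main.v *)
Require Import Defs.
From HB Require Import structures.
From mathcomp Require Import all_boot all_order all_algebra.
Import GRing.Theory.
Local Open Scope ring_scope.

Section Helpers.
Context {F : fieldType} {n : nat}.
Implicit Types (a b m x y : ext F n) (S T U : {set 'I_n}).

Lemma wedge_evec (i : 'I_n) y U : wedge (evec i) y U =
  \sum_(T : {set 'I_n}) (if [disjoint [set i] & T] && ([set i] :|: T == U)
          then (-1) ^+ inv_count [set i] T * y T else 0).
Proof.
rewrite ffunE (bigD1 [set i]) //= [X in _ + X]big1 ?addr0.
  by apply: eq_bigr => T _; rewrite /evec /blade ffunE eqxx mulr1.
move=> S /negbTE HS; apply: big1 => T _.
by rewrite /evec /blade ffunE HS mulr0 mul0r if_same.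
Qed.

Lemma wedge_evec_jin (i j : 'I_n) y U : i != j -> avoids j y -> j \in U ->
  wedge (evec i) y U = 0.
Proof.
move=> ij Hy jU; rewrite wedge_evec; apply: big1 => T _.
case: ifP => // /andP [_ /eqP HU].
have jT : j \in T by move: jU; rewrite -HU in_setU in_set1 eq_sym (negbTE ij).
case: (eqVneq (y T) 0) => [->|/Hy]; first by rewrite mulr0.
by rewrite jT.
Qed.

Lemma wedgeD a b1 b2 : wedge a (b1 + b2) = wedge a b1 + wedge a b2.
Proof.
apply/ffunP => U; rewrite !ffunE -big_split; apply: eq_bigr => S _.
rewrite -big_split; apply: eq_bigr => T _; rewrite ffunE.
by case: ifP => _; [exact: mulrDr | exact: (esym (addr0 _))].
Qed.

Lemma wedgeZ a c b : wedge a (c *: b) = c *: wedge a b.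
Proof.
apply/ffunP => U; rewrite !ffunE scaler_sumr; apply: eq_bigr => S _.
rewrite scaler_sumr; apply: eq_bigr => T _; rewrite ffunE.
by case: ifP => _; [exact: mulrCA | rewrite scaler0].
Qed.

Lemma wedge0 a : wedge a 0 = 0.
Proof. apply/ffunP => U; rewrite !ffunE; apply: big1 => S _; apply: big1 => T _; rewrite ffunE; case: ifP => _ //; exact: mulr0. Qed.

Lemma ypartD (j : 'I_n) a b : ypart j (a + b) = ypart j a + ypart j b.
Proof.
apply/ffunP => T; rewrite !ffunE.
by case: ifP => _; [exact: (esym (addr0 _)) | exact: mulrDr].
Qed.

Lemma ypartZ (j : 'I_n) c a : ypart j (c *: a) = c *: ypart j a.
Proof.
apply/ffunP => T; rewrite !ffunE.
by case: ifP => _; [rewrite scaler0 | exact: mulrCA].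
Qed.

Lemma xpartD (j : 'I_n) a b : xpart j (a + b) = xpart j a + xpart j b.
Proof.
apply/ffunP => T; rewrite !ffunE.
by case: ifP => _; [exact: (esym (addr0 _)) | ].
Qed.

Lemma xpart_id (j : 'I_n) a : avoids j a -> xpart j a = a.
Proof.
move=> Ha; apply/ffunP => S; rewrite ffunE; case: ifP => // jS.
by case: (eqVneq (a S) 0) => // /Ha; rewrite jS.
Qed.

Lemma avoids_xpart (j : 'I_n) a : avoids j (xpart j a).
Proof. by move=> S; rewrite ffunE; case: ifP => //; rewrite eqxx. Qed.

Lemma avoids_ypart (j : 'I_n) a : avoids j (ypart j a).
Proof. by move=> S; rewrite ffunE; case: ifP => //; rewrite eqxx. Qed.

Lemma xpart_wedge (j : 'I_n) y : xpart j (wedge (evec j) y) = 0.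
Proof.
apply/ffunP => U; rewrite [LHS]ffunE [RHS]ffunE; case: ifP => // jU.
rewrite wedge_evec; apply: big1 => T _; case: ifP => // /andP [_ /eqP HU].
by move: jU; rewrite -HU in_setU in_set1 eqxx.
Qed.

Lemma ypart_xpart (j : 'I_n) a : ypart j (xpart j a) = 0.
Proof.
apply/ffunP => T; rewrite !ffunE; case: ifP => // _.
by rewrite setU11 mulr0.
Qed.

Lemma ypart_wedge_i (i j : 'I_n) y : i != j -> avoids j y ->
  ypart j (wedge (evec i) y) = 0.
Proof.
move=> ij Hy; apply/ffunP => T; rewrite [LHS]ffunE [RHS]ffunE; case: ifP => // _.
by rewrite (@wedge_evec_jin i j y (j |: T) ij Hy (setU11 j T)) mulr0.
Qed.

Lemma inv_count1 (j : 'I_n) T :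
  inv_count [set j] T = #|[set t in T | (t < j)%N]|.
Proof.
have inj : injective (fun t : 'I_n => (j, t)) by move=> a b [].
rewrite /inv_count -(card_imset _ inj); apply: eq_card => -[a t].
rewrite !inE /=.
apply/andP/imsetP => [[/andP [/eqP -> tT] ltj]|[t' ]].
  by exists t => //; rewrite inE tT ltj.
by rewrite inE => /andP [tT ltj] [-> ->]; rewrite eqxx tT.
Qed.

Lemma ypart_wedge_j (j : 'I_n) x : avoids j x -> ypart j (wedge (evec j) x) = x.
Proof.
move=> Hx; apply/ffunP => T; rewrite [LHS]ffunE; case: ifP => jT.
  by case: (eqVneq (x T) 0) => // /Hx; rewrite jT.
rewrite wedge_evec (bigD1 T) //= big1 ?addr0.
  have -> : [disjoint [set j] & T] by rewrite disjoints1 jT.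
  rewrite eqxx /= inv_count1 mulrA -exprD addnn -mul2n exprM sqrrN expr1n expr1n.
  by rewrite mul1r.
move=> T' nT'; case: ifP => // /andP [_ /eqP HU].
case: (eqVneq (x T') 0) => [->|/Hx jT']; first by rewrite mulr0.
have : T' = T.
  by rewrite -(setU1K jT') -(setU1K (negbT jT)) -HU.
by move/eqP; rewrite (negbTE nT').
Qed.

End Helpers.

Theorem corollary3p6 (F : fieldType) (n k : nat) (i j : 'I_n)
  (L : {vspace ext F n}) :
  (2%N \notin [pchar F]) ->
  (forall m, m \in L -> homog k m) ->
  (i < j)%N ->
  monomial_wrt k j L ->
  forall x : ext F n, homog_pred k x -> avoids j x ->
  in_shift j i L (wedge (evec j) x) ->
  in_shift j i L (wedge (evec i) x).
Proof.
move=> _ _ ltij Hmon x _ Hx [s [Hs Hv]].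
have ij : i != j by rewrite neq_ltn ltij.
have xL : forall m, m \in L -> xpart j m \in L.
  move=> m /Hmon [a [y [[aL _ aj] [_ ->]]]].
  by rewrite xpartD xpart_id // xpart_wedge addr0.
set s' := s ++ [seq xpart j m | m <- s & xpart j m != 0].
exists s'; split.
  rewrite all_cat Hs /=; apply/allP => z /mapP [m].
  rewrite mem_filter => /andP [nz ms] ->; rewrite nz andbT.
  by apply: xL; have /andP[] := allP Hs m ms.
set P := fun v : ext F n => wedge (evec i) (ypart j v).
have PD : {morph P : a b / a + b >-> a + b}.
  by move=> a b; rewrite /P ypartD wedgeD.
have P0 : P 0 = 0.
  have y0 : ypart j (0 : ext F n) = 0.
    by apply/ffunP => T; rewrite !ffunE; case: ifP => // _; exact: mulr0.
  by rewrite /P y0 wedge0.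
have PZ : forall c a, P (c *: a) = c *: P a.
  by move=> c a; rewrite /P ypartZ wedgeZ.
set W := <<map (slow_shift j i) s'>>%VS.
have Hgen : forall g, g \in map (slow_shift j i) s -> P g \in W.
  move=> g /mapP [m ms ->]; rewrite /slow_shift.
  case: ifP => [_|/negbFE /eqP r0].
    rewrite /P ypartD ypart_xpart (@ypart_wedge_i _ _ i j _ ij (avoids_ypart j m)).
    by rewrite (addr0 (0 : ext F n)) wedge0 mem0v.
  rewrite /P (@ypart_wedge_j _ _ j _ (avoids_ypart j m)).
  have -> : wedge (evec i) (ypart j m) = - xpart j m.
    by apply/eqP; rewrite -addr_eq0 addrC r0.
  rewrite memvN.
  case: (eqVneq (xpart j m) 0) => [->|nz]; first exact: mem0v.
  have -> : xpart j m = slow_shift j i (xpart j m).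
    rewrite /slow_shift ypart_xpart wedge0 addr0.
    by rewrite (@xpart_id _ _ j (xpart j m) (avoids_xpart j m)) nz.
  apply: memv_span; apply: map_f; rewrite mem_cat; apply/orP; right.
  by apply: map_f; rewrite mem_filter nz.
rewrite -(@ypart_wedge_j _ _ j x Hx) -/(P _).
move: Hv; set X := map (slow_shift j i) s => Hv.
rewrite (coord_span (X := in_tuple X) Hv).
rewrite (big_morph P PD P0); apply: memv_suml => l _.
rewrite PZ; apply: memvZ; apply: Hgen; apply: mem_nth.
exact: ltn_ord.
Qed.
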